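(* Fix an assignment $\gamma\mapsto\phi_\gamma$ of LTL formulas to actions such that each $\phi_\gamma$ models $\gamma$, and use the LTL verification scheme described in the context. Let $Z$ be a decision structure that satisfies a specification $\varphi$, let $v$ be a node of $Z$ labelled by the action $\alpha$, and let $r_1,\dots,r_m$ be the labels of the arcs out of $v$. Let $\beta$ be an action such that (i) $\phi_\beta\models\phi_\alpha$, and (ii) for every state $w$ and every $i\in\{1,\dots,m\}$, $\alpha_R(w)=r_i$ if and only if $\beta_R(w)=r_i$. Then the decision structure $Z'$ obtained from $Z$ by relabelling $v$ with $\beta$ also satisfies $\varphi$. Consequently, the predicate ''(i) and (ii) hold'' is a sufficient condition for actions for this scheme.
   Context: Fix sets $\mathbb{W}$ (states), $\mathbb{S}$ (signals), $\mathcal{R}$ (return values). An action is a pair $\alpha=(\alpha_B,\alpha_R)$ with $\alpha_B:\mathbb{W}\to\mathbb{S}$, $\alpha_R:\mathbb{W}\to\mathcal{R}$. A decision structure is a finite directed acyclic graph $Z=(N,A)$ with a unique source, an arc labelling $\ell:A\to\mathcal{R}$ and a node labelling $\eta$ by actions, such that distinct arcs leaving the same node have distinct labels; $Z(w)$ is computed by starting at the source and, at node $v$ with $\eta(v)=\alpha$, following the arc out of $v$ labelled $\alpha_R(w)$ if it exists and otherwise outputting $\alpha$. The world assigns to each state $w$ and signal $x$ a set $\mathrm{Succ}(w,x)$ of infinite state sequences; $w^\alpha:=\mathrm{Succ}(w,\alpha_B(w))$. LTL formulas over atomic state propositions (any subset $U\subseteq\mathbb{W}$ is an atomic proposition, true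 at a state iff the state lies in $U$; non-temporal formulas are evaluated at the first state of a sequence) are evaluated on infinite state sequences with standard semantics; $\phi\models\psi$ means every infinite state sequence satisfying $\phi$ satisfies $\psi$. $\phi$ models $\alpha$ if for every $w_1$ and every $(w_2,w_3,\dots)\in w_1^\alpha$, the sequence $w_1,w_2,\dots$ satisfies $\phi$. LTL verification scheme: for a decision structure $Z$, let $\Delta_Z$ be the finite set of actions labelling its nodes and $Z^{-1}(\gamma)=\{w: Z(w)=\gamma\}$; set $\Psi_Z:=\bigvee_{\gamma\in\Delta_Z}\big(Z^{-1}(\gamma)\wedge\phi_\gamma\big)$. $Z$ satisfies the specification $\varphi$ (an LTL formula) iff $\square\Psi_Z\models\varphi$. A predicate $C(Z,v,\alpha,\beta)$ is a sufficient condition for actions if whenever $Z$ satisfies $\varphi$ and $C(Z,v,\eta(v),\beta)$ holds, the structure obtained by relabelling $v$ with $\beta$ satisfies $\varphi$. *)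

(* Defs.v *)
From Stdlib Require Import Relations.
From mathcomp Require Import all_boot.
Set Implicit Arguments. Unset Strict Implicit. Unset Printing Implicit Defensive.

Section Defs.
Variables (W S R : Type).

Record action := Action { actB : W -> S; actR : W -> R }.

Inductive ltl :=
| LAtom of (W -> Prop)
| LTrue
| LNot of ltl
| LAnd of ltl & ltl
| LOr of ltl & ltl
| LNext of ltl
| LUntil of ltl & ltl
| LAlways of ltl
| LEventually of ltl.

Definition suffix (sigma : nat -> W) (k : nat) : nat -> W := fun n => sigma (k + n).

Fixpoint sat (sigma : nat -> W) (f : ltl) : Prop :=
  match f with
  | LAtom U => U (sigma 0)
  | LTrue => True
  | LNot g => ~ sat sigma g
  | LAnd g h => sat sigma g /\ sat sigma h
  | LOr g h => sat sigma g \/ sat sigma h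
  | LNext g => sat (suffix sigma 1) g
  | LUntil g h => exists k, sat (suffix sigma k) h /\
                    forall j, j < k -> sat (suffix sigma j) g
  | LAlways g => forall k, sat (suffix sigma k) g
  | LEventually g => exists k, sat (suffix sigma k) g
  end.

Definition entails (f g : ltl) : Prop := forall sigma, sat sigma f -> sat sigma g.

Definition scons (w : W) (sigma : nat -> W) : nat -> W :=
  fun n => match n with 0 => w | n'.+1 => sigma n' end.

Definition models (Succ : W -> S -> (nat -> W) -> Prop) (f : ltl) (a : action) : Prop :=
  forall w1 sigma, Succ w1 (actB a w1) sigma -> sat (scons w1 sigma) f.

Record dstruct := DStruct {
  dnode : finType;
  darc : finType;
  dsrc : darc -> dnode;
  dtgt : darc -> dnode;
  dlab : darc -> R;
  deta : dnode -> action;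
  droot : dnode }.

Definition dedge (Z : dstruct) (u v : dnode Z) : Prop := exists a, dsrc a = u /\ dtgt a = v.

Definition wf_dstruct (Z : dstruct) : Prop :=
  (forall v, ~ clos_trans (dnode Z) (@dedge Z) v v) /\
  (forall a : darc Z, dtgt a <> droot Z) /\
  (forall v, v <> droot Z -> exists a : darc Z, dtgt a = v) /\
  (forall a b : darc Z, dsrc a = dsrc b -> dlab a = dlab b -> a = b).

Inductive runs (Z : dstruct) (w : W) : dnode Z -> action -> Prop :=
| runs_stop v : (forall a, dsrc a = v -> dlab a <> actR (deta v) w) ->
    runs w v (deta v)
| runs_step v a g : dsrc a = v -> dlab a = actR (deta v) w ->
    runs w (dtgt a) g -> runs w v g.

Definition evalZ (Z : dstruct) (w : W) (g : action) : Prop := @runs Z w (droot Z) g.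

(** Psi_Z := \/_{gamma in Delta_Z} (Z^{-1}(gamma) /\ phi_gamma),
    Delta_Z being the labels of the nodes of Z. *)
Definition PsiZ (phi : action -> ltl) (Z : dstruct) : ltl :=
  foldr (fun v f => LOr (LAnd (LAtom (fun w => evalZ Z w (deta v))) (phi (deta v))) f)
        (LNot LTrue) (enum (dnode Z)).

Definition satisfies (phi : action -> ltl) (Z : dstruct) (spec : ltl) : Prop :=
  entails (LAlways (PsiZ phi Z)) spec.

Definition relabel (Z : dstruct) (v : dnode Z) (b : action) : dstruct :=
  @DStruct (dnode Z) (darc Z) (@dsrc Z) (@dtgt Z) (@dlab Z)
    (fun u => if u == v then b else deta u) (droot Z).

Definition sufficient_condition (phi : action -> ltl)
  (C : forall Z : dstruct, dnode Z -> action -> action -> Prop) : Prop :=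
  forall (Z : dstruct) (v : dnode Z) (b : action) (spec : ltl),
    wf_dstruct Z -> satisfies phi Z spec -> C Z v (deta v) b ->
    satisfies phi (relabel v b) spec.

Definition cond_i_ii (phi : action -> ltl) (Z : dstruct) (v : dnode Z)
  (a b : action) : Prop :=
  entails (phi b) (phi a) /\
  (forall (w : W) (e : darc Z), dsrc e = v ->
      (actR a w = dlab e <-> actR b w = dlab e)).

End Defs.

(* Main.v *)
Require Import Defs.
From mathcomp Require Import all_boot.

Section H.
Variables (W S R : Type).

Lemma sat_foldr (phi : action W S R -> ltl W) (Z : dstruct W S R) (sigma : nat -> W) (l : seq (dnode Z)) :
  sat sigma (foldr (fun v f => LOr (LAnd (LAtom (fun w => evalZ Z w (deta v))) (phi (deta v))) f)
        (LNot (@LTrue W)) l) <->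
  exists u, u \in l /\ evalZ Z (sigma 0) (deta u) /\ sat sigma (phi (deta u)).
Proof.
elim: l => [|x l IH] /=.
  split; [by move=> H; exfalso; apply: H | by case=> u []].
split.
  case=> [[H1 H2]|H]; first by exists x; rewrite inE eqxx.
  by case/IH: H => u [Hu H]; exists u; rewrite inE Hu orbT.
case=> u [Hu [H1 H2]]; move: Hu; rewrite inE => /orP [/eqP Ex|Hu]; first by left; rewrite -Ex.
by right; apply/IH; exists u.
Qed.

Lemma sat_Psi (phi : action W S R -> ltl W) (Z : dstruct W S R) (sigma : nat -> W) :
  sat sigma (PsiZ phi Z) <->
  exists u : dnode Z, evalZ Z (sigma 0) (deta u) /\ sat sigma (phi (deta u)).
Proof.
rewrite /PsiZ; split.
  by move/sat_foldr => [u [_ H]]; exists u.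
by case=> u H; apply/sat_foldr; exists u; rewrite mem_enum.
Qed.

Lemma runs_relabel (Z : dstruct W S R) (v : dnode Z) (b : action W S R) w :
  (forall e : darc Z, dsrc e = v ->
        (actR (deta v) w = dlab e <-> actR b w = dlab e)) ->
  forall u g, @runs W S R (relabel v b) w u g ->
    exists n : dnode Z, @runs W S R Z w u (deta n) /\ g = (if n == v then b else deta n).
Proof.
move=> Hv u g; elim=> {u g}.
- move=> u /= Hst; exists u; split=> //.
  apply: runs_stop; move=> e He Hl.
  case: (eqVneq u v) Hst He Hl => [Euv|Nuv] Hst He Hl.
  + rewrite Euv in Hst He Hl; apply: (Hst e He); symmetry; apply/(Hv e He); by rewrite Hl.
  + apply: (Hst e He); rewrite ?(negbTE Nuv) //.
- move=> u a g /= Ha Hl _ [n [Hn Eg]]; exists n; split=> //.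
  apply: (@runs_step W S R Z w u a) => //.
  case: (eqVneq u v) Ha Hl => [Euv|Nuv] Ha Hl.
  + rewrite Euv in Ha Hl *; symmetry; apply/(Hv a Ha); by rewrite Hl.
  + move: Hl => /=; rewrite ?(negbTE Nuv) //.
Qed.

End H.

Theorem mainTheorem19 (W S R : Type) (Succ : W -> S -> (nat -> W) -> Prop)
  (phi : action W S R -> ltl W)
  (hphi : forall g : action W S R, models Succ (phi g) g) :
  (forall (Z : dstruct W S R) (spec : ltl W) (v : dnode Z) (b : action W S R),
     wf_dstruct Z ->
     satisfies phi Z spec ->
     entails (phi b) (phi (deta v)) ->
     (forall (w : W) (e : darc Z), dsrc e = v ->
        (actR (deta v) w = dlab e <-> actR b w = dlab e)) ->
     satisfies phi (relabel v b) spec)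
  /\ sufficient_condition phi (@cond_i_ii W S R phi).
Proof.
have P1 : forall (Z : dstruct W S R) (spec : ltl W) (v : dnode Z) (b : action W S R),
     wf_dstruct Z ->
     satisfies phi Z spec ->
     entails (phi b) (phi (deta v)) ->
     (forall (w : W) (e : darc Z), dsrc e = v ->
        (actR (deta v) w = dlab e <-> actR b w = dlab e)) ->
     satisfies phi (relabel v b) spec.
  move=> Z spec v b _ HZ Hi Hii sigma Hs; apply: HZ => k.
  have /sat_Psi [u [Hev Hph]] := Hs k.
  apply/sat_Psi.
  have [n [Hn Eg]] := @runs_relabel W S R Z v b _ (Hii (Defs.suffix sigma k 0)) _ _ Hev.
  case: (eqVneq n v) Eg => [Env|Nnv] Eg.
  - subst n; exists v; split=> //; apply: Hi; by rewrite -Eg.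
  - exists n; split=> //; by rewrite -Eg.
split=> //.
move=> Z v b spec Hwf HZ [Hi Hii]; exact: P1.
Qed.
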